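(* Let $(A,E,\varepsilon,\tau)$ be an analytical $B$-$B$-non-commutative probability space. If $\widetilde{E}:L_2(A,\tau)\to L_2(B,\tau_B)$ denotes the orthogonal projection, then $\widetilde{E}(a) = \widehat{E(a)}$ for all $a \in A$. In particular, when $\tau_B$ is faithful, $\widetilde{E}$ extends $E$.
   Context: An analytical $B$-$B$-non-commutative probability space $(A,E,\varepsilon,\tau)$ consists of a $B$-$B$-non-commutative probability space $(A,E,\varepsilon)$ (with $L_b=\varepsilon(b\otimes 1_B)$, $R_b=\varepsilon(1_B\otimes b)$, left algebra $A_\ell$ and right algebra $A_r$) together with a state $\tau:A\to\mathbb{C}$ compatible with $E$ (i.e. $\tau(a)=\tau(L_{E(a)})=\tau(R_{E(a)})$ for all $a\in A$), such that $\tau_B(b)=\tau(L_b)$ is a tracial state on $B$, left multiplication by elements of $A$ on $A/N_\tau$ is bounded (so extends to $L_2(A,\tau)$), and $E$ is completely positive on $A_\ell$ and on $A_r$. Here $N_\tau=\{a\in A:\tau(a^*a)=0\}$, $L_2(A,\tau)$ is the completion of $A/N_\tau$, and $L_2(B,\tau_B)$ is identified with the closure of $\{L_b+N_\tau : b\in B\}$ in $L_2(A,\tau)$ via the isometry $b+N_{\tau_B}\mapsto L_b+N_\tau$. For $a\in A$ the coset $a+N_\tau$ is denoted $a$, and for $b\in B$ the coset $b+N_{\tau_B}$ is denoted $\widehat{b}$. *)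

(* Defs.v *)
From mathcomp Require Import all_boot all_order all_algebra.
From mathcomp Require Import reals complex.
Set Implicit Arguments. Unset Strict Implicit. Unset Printing Implicit Defensive.
Import Order.TTheory GRing.Theory Num.Theory.
Local Open Scope ring_scope.

Section Defs.
Variable C : numClosedFieldType.

Definition is_star_alg (A : algType C) (s : A -> A) : Prop :=
  [/\ forall a, s (s a) = a,
      forall a b, s (a + b) = s a + s b,
      forall (c : C) a, s (c *: a) = c^* *: s a
    & forall a b, s (a * b) = s b * s a].

Definition mxstar (A : algType C) (s : A -> A) n (X : 'M[A]_n) : 'M[A]_n :=
  \matrix_(i, j) s (X j i).

Definition lin_fun (A : algType C) (f : A -> C) : Prop :=
  forall (c : C) a b, f (c *: a + b) = c * f a + f b.

Definition lin_map (A B : algType C) (f : A -> B) : Prop :=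
  forall (c : C) a b, f (c *: a + b) = c *: f a + f b.

Definition is_state (A : algType C) (s : A -> A) (tau : A -> C) : Prop :=
  [/\ lin_fun tau, tau 1 = 1 & forall a, 0 <= tau (s a * a)].

Definition is_tracial_state (A : algType C) (s : A -> A) (tau : A -> C) : Prop :=
  is_state s tau /\ forall a b, tau (a * b) = tau (b * a).

Definition cp_on (A B : algType C) (sA : A -> A) (sB : B -> B)
    (E : A -> B) (P : A -> Prop) : Prop :=
  forall n (X : 'M[A]_n), (forall i j, P (X i j)) ->
    exists Ys : seq 'M[B]_n,
      map_mx E (mxstar sA X *m X) = \sum_(Y <- Ys) (mxstar sB Y *m Y).

(* ---------- B-B-non-commutative probability spaces ----------
   The unital homomorphism eps : B (x) B^op -> A is given through its
   restrictions L_b = eps(b (x) 1) and R_b = eps(1 (x) b), i.e. a unital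
   homomorphism L : B -> A and a unital anti-homomorphism R : B -> A with
   commuting ranges; then eps(b1 (x) b2) = L b1 * R b2. *)
Definition BB_ncps (A B : algType C) (L R : B -> A) (E : A -> B) : Prop :=
  [/\ lin_map L, L 1 = 1 & forall b1 b2, L (b1 * b2) = L b1 * L b2] /\
  [/\ lin_map R, R 1 = 1 & forall b1 b2, R (b1 * b2) = R b2 * R b1] /\
  (forall b1 b2, L b1 * R b2 = R b2 * L b1) /\
  (injective L /\ injective R) /\
  lin_map E /\
  (forall b1 b2 T, E (L b1 * R b2 * T) = b1 * E T * b2) /\
  (forall T b, E (T * L b) = E (T * R b)).

Definition left_alg (A B : algType C) (R : B -> A) (T : A) : Prop :=
  forall b, T * R b = R b * T.
Definition right_alg (A B : algType C) (L : B -> A) (T : A) : Prop :=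
  forall b, T * L b = L b * T.

Definition analytical_BB_ncps (A B : algType C) (sA : A -> A) (sB : B -> B)
    (L R : B -> A) (E : A -> B) (tau : A -> C) : Prop :=
  (is_star_alg sA /\ is_star_alg sB) /\
  BB_ncps L R E /\
  (* eps is a *-homomorphism *)
  ((forall b, L (sB b) = sA (L b)) /\ (forall b, R (sB b) = sA (R b))) /\
  is_state sA tau /\
  (forall a, tau a = tau (L (E a)) /\ tau a = tau (R (E a))) /\
  (* tau_B(b) = tau(L_b) is a tracial state on B *)
  is_tracial_state sB (fun b => tau (L b)) /\
  (forall a, exists M : C, 0 <= M /\
     forall x, tau (sA (a * x) * (a * x)) <= M * tau (sA x * x)) /\
  (cp_on sA sB E (left_alg R) /\ cp_on sA sB E (right_alg L)).

Section Hilbert.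
Variable H : lmodType C.
Variable ip : H -> H -> C. (* linear in the first variable *)

Definition inner_product : Prop :=
  [/\ forall (c : C) x y z, ip (c *: x + y) z = c * ip x z + ip y z,
      forall x y, ip y x = (ip x y)^*,
      forall x, 0 <= ip x x
    & forall x, ip x x = 0 -> x = 0].

Definition sqdist (x y : H) : C := ip (x - y) (x - y).

Definition complete_ip : Prop :=
  forall u : nat -> H,
    (forall eps : C, 0 < eps -> exists N, forall m n,
        (N <= m)%N -> (N <= n)%N -> sqdist (u m) (u n) < eps) ->
    exists x, forall eps : C, 0 < eps -> exists N, forall n,
        (N <= n)%N -> sqdist (u n) x < eps.

Definition in_closure (S : H -> Prop) (x : H) : Prop :=
  forall eps : C, 0 < eps -> exists y, S y /\ sqdist x y < eps.

Definition orth_proj (K : H -> Prop) (P : H -> H) : Prop :=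
  forall x, K (P x) /\ forall k, K k -> ip (x - P x) k = 0.
End Hilbert.

(* (H, ip, iota) is (a model of) L_2(A, tau): H is a Hilbert space,
   iota : A -> H is linear with <iota a, iota a'> = tau(a'^* a) and dense
   range; so iota a is the coset a + N_tau inside the completion. *)
Definition L2_model (A : algType C) (sA : A -> A) (tau : A -> C)
    (H : lmodType C) (ip : H -> H -> C) (iota : A -> H) : Prop :=
  [/\ inner_product ip, complete_ip ip,
      forall (c : C) a b, iota (c *: a + b) = c *: iota a + iota b,
      forall a b, ip (iota a) (iota b) = tau (sA b * a)
    & forall x, in_closure ip (fun y => exists a, y = iota a) x].

End Defs.

(* Main.v *)
Require Import Defs.
From mathcomp Require Import all_boot all_order all_algebra.
From mathcomp Require Import reals complex.
From mathcomp Require Import ring.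
Import Order.TTheory GRing.Theory Num.Theory.
Local Open Scope ring_scope.

Section IP.
Variables (C : numClosedFieldType) (H : lmodType C) (ip : H -> H -> C).
Hypothesis hip : inner_product ip.

Lemma ip0l z : ip 0 z = 0.
Proof.
case: hip => lin _ _ _.
have := lin 1 0 0 z; rewrite scaler0 addr0 mul1r => h.
by apply/eqP; rewrite -(addrI _ (esym (etrans (addr0 _) h))).
Qed.

Lemma ipDl x y z : ip (x + y) z = ip x z + ip y z.
Proof. by case: hip => lin _ _ _; rewrite -{1}[x]scale1r lin mul1r. Qed.

Lemma ipZl c x z : ip (c *: x) z = c * ip x z.
Proof. by case: hip => lin _ _ _; rewrite -[c *: x]addr0 lin ip0l addr0. Qed.

Lemma ipBl x y z : ip (x - y) z = ip x z - ip y z.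
Proof. by rewrite ipDl -scaleN1r ipZl mulN1r. Qed.

Lemma ipC x y : ip y x = (ip x y)^*.
Proof. by case: hip. Qed.

Lemma ipBr x y z : ip z (x - y) = ip z x - ip z y.
Proof. by rewrite ipC ipBl rmorphB /= -!ipC. Qed.

Lemma ipZr c x z : ip z (c *: x) = c^* * ip z x.
Proof. by rewrite ipC ipZl rmorphM /= -ipC. Qed.

Lemma ip_ge0 x : 0 <= ip x x.
Proof. by case: hip. Qed.

Lemma ip_eq0 x : ip x x = 0 -> x = 0.
Proof. by case: hip => _ _ _; apply. Qed.

Lemma orth_closure (S : H -> Prop) w k :
  (forall s, S s -> ip w s = 0) -> in_closure ip S k -> ip w k = 0.
Proof.
move=> hS hk.
have [w0|wn0] := eqVneq w 0; first by rewrite w0 ip0l.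
set c := ip w k.
apply/eqP/negPn/negP => cn0.
set a := ip w w.
have a0 : 0 < a.
  rewrite lt_def ip_ge0 andbT; apply/negP => /eqP/ip_eq0 h.
  by move: wn0; rewrite h eqxx.
have cc0 : 0 < c * c^* by rewrite mul_conjC_gt0.
have eps0 : 0 < c * c^* / a by rewrite divr_gt0.
have [y [Sy hd]] := hk _ eps0.
set u := k - y.
have cu : c = ip w u by rewrite /u ipBr (hS _ Sy) subr0.
have hu : ip u u < c * c^* / a by [].
clearbody u.
have ac : a^* = a by rewrite geC0_conj // ip_ge0.
have e1 : ip u w = c^* by rewrite cu -ipC.
have := ip_ge0 (a *: u - (ip u w) *: w).
rewrite !ipBl !ipBr !ipZl !ipZr ac.
rewrite e1 -cu -/a conjCK.
have -> : a * (a * ip u u) - a * (c * c^*) - (c^* * (a * c) - c^* * (c * a))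
   = a * (a * ip u u - c * c^*) by ring.
rewrite pmulr_rge0 // subr_ge0 => hle.
have : a * ip u u < c * c^*.
  by move: hu; rewrite -(ltr_pM2l a0) [X in _ < X]mulrC divfK // gt_eqF.
by move=> /lt_le_trans /(_ hle); rewrite ltxx.
Qed.

End IP.

(* L_2(B, tau_B) is identified with the closure in L_2(A, tau) of
   { L_b + N_tau : b in B } = { iota (L b) }, and b^ := iota (L b). *)
Theorem proposition3p7 (R : realType) (A B : algType R[i])
    (sA : A -> A) (sB : B -> B) (L Rm : B -> A) (E : A -> B) (tau : A -> R[i])
    (H : lmodType R[i]) (ip : H -> H -> R[i]) (iota : A -> H) (Et : H -> H) :
  analytical_BB_ncps sA sB L Rm E tau ->
  L2_model sA tau ip iota ->
  orth_proj ip (in_closure ip (fun y => exists b, y = iota (L b))) Et ->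
  (forall a : A, Et (iota a) = iota (L (E a))) /\
  ((forall b : B, tau (L (sB b * b)) = 0 -> b = 0) ->
     injective (fun b : B => iota (L b))).
Proof.
move=> [_ [[[Llin L1 LM] [[_ R1 _] [_ [_ [_ [EM _]]]]]] [[LsB _] [[tl _ _] [htau _]]]]].
move=> [hip _ iotalin iotaip _] hP.
have iotaB a b : iota (a - b) = iota a - iota b.
  by have := iotalin (-1) b a; rewrite !scaleN1r => h; rewrite addrC h addrC.
have LB a b : L (a - b) = L a - L b.
  by have := Llin (-1) b a; rewrite !scaleN1r => h; rewrite addrC h addrC.
split.
  move=> a.
  set S := fun y => exists b, y = iota (L b).
  set K := in_closure ip S.
  have SK s : S s -> K s.
    move=> Ss e e0; exists s; split => //.
    by rewrite /sqdist subrr ip0l.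
  set p := iota (L (E a)).
  have pK : K p by apply: SK; exists (E a).
  have orthp s : S s -> ip (iota a - p) s = 0.
    move=> [b ->]; rewrite -iotaB iotaip -LsB mulrBr.
    rewrite -LM.
    have -> : tau (L (sB b) * a - L (sB b * E a)) =
      tau (L (sB b) * a) - tau (L (sB b * E a)).
      by have := tl (-1) (L (sB b * E a)) (L (sB b) * a); rewrite scaleN1r mulN1r => h; rewrite addrC h addrC.
    have [-> _] := htau (L (sB b) * a).
    have e : E (L (sB b) * a) = sB b * E a.
      by have := EM (sB b) 1 a; rewrite R1 !mulr1.
    by rewrite e subrr.
  have [EtK orthEt] := hP (iota a).
  set d := Et (iota a) - p.
  have dS s : S s -> ip d s = 0.
    move=> Ss.
    have -> : d = (iota a - p) - (iota a - Et (iota a)).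
      by rewrite /d opprB addrAC addrCA subrr addr0.
    by rewrite ipBl // orthp // orthEt ?subr0 //; apply: SK.
  have dd : ip d d = 0.
    rewrite {2}/d ipBr //.
    by rewrite !(@orth_closure _ _ _ hip _ _ _ dS) ?subr0.
  by apply/eqP; rewrite -subr_eq0; apply/eqP; apply: (@ip_eq0 _ _ _ hip).
move=> faith b1 b2 /= h.
apply/eqP; rewrite -subr_eq0; apply/eqP; apply: faith.
have h0 : iota (L (b1 - b2)) = 0 by rewrite LB iotaB h subrr.
by rewrite LM LsB -iotaip h0 ip0l.
Qed.
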